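(* Let $v\in\Delta$ be an equilibrium, i.e. $F(v)=0$. Then for $i,j\in\mathrm{supp}(v)$, $$D_{e_i-e_j}F(v)=(\alpha-1)(e_i-e_j)+\alpha\sum_{\ell}\frac{v_\ell^\alpha\big(A_{\ell,i}v_i^{\alpha-1}-A_{\ell,j}v_j^{\alpha-1}\big)}{H(v)}\,e_\ell,$$ and for $i\notin\mathrm{supp}(v)$, $$D_{e_i-v}F(v)=-(e_i-v).$$ Furthermore, all eigenvalues of $DF(v)$ are real.
   Context: Let $N\ge2$, $\alpha>1$, and let $A=(A_{i,j})_{i,j\le N}$ be a symmetric matrix with nonnegative entries, $A_{i,j}>0$ for $i\ne j$, and $\sum_j A_{i,j}$ independent of $i$. Let $(e_1,\dots,e_N)$ be the canonical basis of $\mathbb R^N$. Let $\Delta=\{v\in\mathbb R_+^N:\ \sum_i v_i=1,\ v_i\le 3/4 \text{ whenever } A_{i,i}=0\}$. For $v$ with nonnegative coordinates let $v^\alpha=(v_i^\alpha)_i$, $H(v)=\sum_{i,j}A_{i,j}v_i^\alpha v_j^\alpha$ and $\pi_i(v)=v_i^\alpha(Av^\alpha)_i/H(v)$; on $\Delta$ the vector field is $F(v)=-v+\pi(v)$, and $DF(v)$ (resp. $D_xF(v)$) denotes the differential (resp. directional derivative in direction $x$) at $v$ of the map $v\mapsto -v+\pi(v)$, viewed as a linear map of $T_0\Delta=\{x\in\mathbb R^N:\sum_ix_i=0\}$. $\mathrm{supp}(v)=\{i: v_i\neq0\}$. *)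

(* Defs.v *)
From HB Require Import structures.
From mathcomp Require Import all_boot all_order all_algebra.
From mathcomp Require Import all_classical all_reals all_analysis.
From mathcomp Require Import complex.
Set Implicit Arguments. Unset Strict Implicit. Unset Printing Implicit Defensive.
Import Order.TTheory GRing.Theory Num.Theory.
Import numFieldNormedType.Exports.
Local Open Scope ring_scope.

Section Defs.
Variables (R : realType) (N : nat).

(* v_i^alpha, extended to all of R as |x|^alpha (agrees with x^alpha for x >= 0) *)
Definition apow (alpha x : R) : R := `|x| `^ alpha.

Definition ebase (i : 'I_N) : 'rV[R]_N := delta_mx 0 i.

Definition Hfun (A : 'M[R]_N) (alpha : R) (v : 'rV[R]_N) : R :=
  \sum_(i < N) \sum_(j < N) A i j * apow alpha (v 0 i) * apow alpha (v 0 j).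

Definition pifun (A : 'M[R]_N) (alpha : R) (v : 'rV[R]_N) : 'rV[R]_N :=
  \row_(i < N) (apow alpha (v 0 i) * (\sum_(j < N) A i j * apow alpha (v 0 j))
                / Hfun A alpha v).

Definition Ffun (A : 'M[R]_N) (alpha : R) (v : 'rV[R]_N) : 'rV[R]_N :=
  - v + pifun A alpha v.

Definition inDelta (A : 'M[R]_N) (v : 'rV[R]_N) : Prop :=
  [/\ forall i, 0 <= v 0 i,
      \sum_(i < N) v 0 i = 1 &
      forall i, A i i = 0 -> v 0 i <= 3 / 4].

(* matrix of a linear map f on row vectors: x *m linmx f = f x *)
Definition linmx (f : 'rV[R]_N -> 'rV[R]_N) : 'M[R]_N :=
  \matrix_(l < N, k < N) f (ebase l) 0 k.

(* eigenvalues (over C) of the linear map x |-> x *m M restricted to the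
   invariant subspace T_0 = {x | sum_i x_i = 0} *)
Definition eigenvalue_T0 (M : 'M[R]_N) (lam : R[i]) : Prop :=
  exists z : 'rV[R[i]]_N,
    [/\ z != 0, \sum_(k < N) z 0 k = 0 &
        z *m map_mx (real_complex R) M = lam *: z].

End Defs.

(* Main.v *)
Require Import Defs.
From HB Require Import structures.
From mathcomp Require Import all_boot all_order all_algebra.
From mathcomp Require Import all_classical all_reals all_analysis.
From mathcomp Require Import complex.
From mathcomp Require Import ring lra.
Import Order.TTheory GRing.Theory Num.Theory.
Import numFieldNormedType.Exports.
Local Open Scope classical_set_scope.
Local Open Scope ring_scope.

Section G.
Context {R : realType} (alpha : R).
Hypothesis a1 : 1 < alpha.

Definition gabs (t : R) : R := `|t| `^ alpha.

Lemma gabs_der0 : derivable gabs 0 1 /\ 'D_1 gabs 0 = 0.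
Proof.
have a0 : alpha != 0 by rewrite gt_eqF // (lt_trans ltr01 a1).
have am1 : 0 < alpha - 1 by rewrite subr_gt0.
have L : (fun h : R => h^-1 *: ((gabs \o shift 0) (h *: 1) - gabs 0)) @ 0^' --> (0:R).
  apply/cvgr0Pnorm_lt => e e0.
  have d0 : 0 < e `^ (alpha - 1)^-1 by rewrite powR_gt0.
  near=> h.
  have hn0 : h != 0 by near: h; exact: nbhs_dnbhs_neq.
  have hd : `|h| < e `^ (alpha - 1)^-1 by near: h; exact: dnbhs0_lt.
  rewrite /= /gabs addr0 normr0 powR0 // subr0 [_ *: 1]mulr1.
  rewrite -mulr_powRB1 // ?normr_ge0 //.
  rewrite normrZ normrM normfV normr_id (ger0_norm (powR_ge0 _ _)) mulKf ?normr_eq0 //.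
  have := gt0_ltr_powR am1 _ _ hd.
  rewrite -powRrM mulVf ?gt_eqF // powRr1 ?(ltW e0) //; apply.
    by rewrite qualifE /= normr_ge0.
  by rewrite qualifE /= ltW.
  exact: (lt_trans ltr01 a1).
split; first by apply/cvg_ex; exists 0.
exact: cvg_lim L.
Unshelve. all: by end_near. Qed.

Lemma gabs_der t0 : 0 <= t0 -> derivable gabs t0 1 /\ 'D_1 gabs t0 = alpha * t0 `^ (alpha - 1).
Proof.
rewrite le_eqVlt => /predU1P[<-|t0p].
  have [d ->] := gabs_der0; split => //.
  by rewrite powR0 ?mulr0 // subr_eq0 gt_eqF.
have H : is_derive t0 1 gabs (alpha * t0 `^ (alpha - 1)).
  apply: (near_eq_is_derive _ (is_derive1_powR alpha t0p)).
  near=> t; rewrite /gabs ger0_norm //; apply: ltW; near: t; exact: lt_nbhsr.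
by split; [exact: ex_derive | exact: derive_val].
Unshelve. all: by end_near. Qed.

End G.

Definition hasD {R : realType} {N : nat} (v : 'rV[R]_N) (f : 'rV[R]_N -> R) (df : 'rV[R]_N -> R) :=
  differentiable f v /\ forall x, 'd f v x = df x.

Section HD.
Context {R : realType} {N : nat} {v : 'rV[R]_N}.

Lemma hasD_coord k : hasD v (fun w => w 0 k) (fun x => x 0 k).
Proof.
have lin : linear (fun w : 'rV[R]_N => w 0 k) by move=> a u w; rewrite !mxE.
pose fL : {linear 'rV[R]_N -> R} := HB.pack (fun w : 'rV[R]_N => w 0 k) (GRing.isLinear.Build _ _ _ _ _ lin).
have cf : continuous fL by exact: coord_continuous.
split; first exact: (linear_differentiable v cf).
by move=> x; rewrite (diff_lin v cf).
Qed.

Lemma hasD_cst c : hasD v (fun _ => c) (fun _ => 0).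
Proof. split; first exact: differentiable_cst.
by move=> x; rewrite (diff_cst (V:='rV[R]_N) c v). Qed.

Lemma hasD_add {f g df dg} : hasD v f df -> hasD v g dg ->
  hasD v (fun w => f w + g w) (fun x => df x + dg x).
Proof.
move=> [f1 f2] [g1 g2]; split; first exact: (differentiableD f1 g1).
by move=> x; rewrite (diffD f1 g1) /= -f2 -g2.
Qed.

Lemma hasD_opp {f df} : hasD v f df -> hasD v (fun w => - f w) (fun x => - df x).
Proof.
move=> [f1 f2]; split; first exact: (differentiableN f1).
by move=> x; rewrite (diffN f1) /= -f2.
Qed.

Lemma hasD_mul {f g df dg} : hasD v f df -> hasD v g dg ->
  hasD v (fun w => f w * g w) (fun x => f v * dg x + g v * df x).
Proof.
move=> [f1 f2] [g1 g2]; split; first exact: (differentiableM f1 g1).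
by move=> x; rewrite (diffM f1 g1) /= -f2 -g2.
Qed.

Lemma hasD_inv {f df} : hasD v f df -> f v != 0 ->
  hasD v (fun w => (f w)^-1) (fun x => - (f v) ^- 2 * df x).
Proof.
move=> [f1 f2] fv; split; first exact: (differentiableV f1 fv).
by move=> x; rewrite (diffV f1 fv) /= -f2.
Qed.

Lemma hasD_sum {n} {f : 'I_n -> 'rV[R]_N -> R} {df} : (forall i, hasD v (f i) (df i)) ->
  hasD v (fun w => \sum_(i < n) f i w) (fun x => \sum_(i < n) df i x).
Proof.
elim: n f df => [|n IH] f df H.
  have -> : (fun w : 'rV[R]_N => \sum_(i < 0) f i w) = fun _ => 0.
    by apply: funext => w; rewrite big_ord0.
  have -> : (fun x : 'rV[R]_N => \sum_(i < 0) df i x) = fun _ => 0.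
    by apply: funext => w; rewrite big_ord0.
  exact: hasD_cst.
have -> : (fun w : 'rV[R]_N => \sum_(i < n.+1) f i w) =
   fun w => \sum_(i < n) f (widen_ord (leqnSn n) i) w + f ord_max w.
  by apply: funext => w; rewrite big_ord_recr.
have -> : (fun w : 'rV[R]_N => \sum_(i < n.+1) df i w) =
   fun w => \sum_(i < n) df (widen_ord (leqnSn n) i) w + df ord_max w.
  by apply: funext => w; rewrite big_ord_recr.
apply: hasD_add; last exact: H.
exact: (IH (fun i => f (widen_ord (leqnSn n) i)) (fun i => df (widen_ord (leqnSn n) i))).
Qed.

Lemma hasD_comp1 {g : R -> R} {f df} : hasD v f df -> derivable g (f v) 1 ->
  hasD v (fun w => g (f w)) (fun x => df x * 'D_1 g (f v)).
Proof.
move=> [f1 f2] /derivable1_diffP g1; split; first exact: (differentiable_comp f1 g1).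
by move=> x; rewrite (diff_comp f1 g1) /= (diff1E g1) f2 derive1E.
Qed.


Lemma hasD_ext {f df dg} : hasD v f df -> (forall x, df x = dg x) -> hasD v f dg.
Proof. by move=> [f1 f2] e; split => // x; rewrite f2 e. Qed.

Lemma hasD_cmul c {f df} : hasD v f df -> hasD v (fun w => c * f w) (fun x => c * df x).
Proof.
move=> h; have [d1 d2] := hasD_mul (hasD_cst c) h.
by split => // x; rewrite d2 mulr0 addr0.
Qed.

End HD.

Section Main.
Variables (R : realType) (N : nat) (alpha : R) (A : 'M[R]_N) (v : 'rV[R]_N).
Hypotheses (a1 : 1 < alpha) (Asym : A^T = A) (v0 : forall i, 0 <= v 0 i)
  (vsum : \sum_(i < N) v 0 i = 1) (Feq : Ffun A alpha v = 0).

Definition Sf (l : 'I_N) (w : 'rV[R]_N) := \sum_(j < N) A l j * apow alpha (w 0 j).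
Definition comp (l : 'I_N) (w : 'rV[R]_N) : R := - w 0 l + apow alpha (w 0 l) * Sf l w * (Hfun A alpha w)^-1.
Definition pp k := v 0 k `^ alpha.
Definition qq k := v 0 k `^ (alpha - 1).
Definition Hv := Hfun A alpha v.

Lemma compE l w : Ffun A alpha w 0 l = comp l w.
Proof. by rewrite !mxE. Qed.

Lemma apowv k : apow alpha (v 0 k) = pp k.
Proof. by rewrite /apow ger0_norm. Qed.

Lemma Asymij i j : A i j = A j i.
Proof. by rewrite -{1}Asym mxE. Qed.

Lemma SvE l : Sf l v = \sum_(j < N) A l j * pp j.
Proof. by apply: eq_bigr => j _; rewrite apowv. Qed.

Lemma dP k : hasD v (fun w => apow alpha (w 0 k)) (fun x => alpha * qq k * x 0 k).
Proof.
have [g1 g2] := gabs_der alpha a1 _ (v0 k).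
have [d1 d2] := hasD_comp1 (g := gabs alpha) (hasD_coord k) g1.
by split => // x; rewrite d2 g2 mulrC.
Qed.

Lemma dS l : hasD v (Sf l) (fun x => \sum_(j < N) A l j * (alpha * qq j * x 0 j)).
Proof.
apply: (hasD_sum (f := fun j w => A l j * apow alpha (w 0 j))) => j.
exact: hasD_cmul (dP j).
Qed.

Definition dHf (x : 'rV[R]_N) : R := \sum_(i < N) \sum_(j < N)
   (A i j * pp i * (alpha * qq j * x 0 j) + pp j * (A i j * (alpha * qq i * x 0 i))).

Lemma dH : hasD v (Hfun A alpha) dHf.
Proof.
apply: (hasD_sum (f := fun i w => \sum_(j < N) A i j * apow alpha (w 0 i) * apow alpha (w 0 j))) => i.
apply: (hasD_sum (f := fun j w => A i j * apow alpha (w 0 i) * apow alpha (w 0 j))) => j.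
apply: hasD_ext (hasD_mul (hasD_cmul (A i j) (dP i)) (dP j)) _ => x.
by rewrite !apowv.
Qed.


Lemma Hv_neq0 : Hv != 0.
Proof.
apply/negP => /eqP H0.
have : \sum_(i < N) v 0 i = 0.
  apply: big1 => i _.
  have := congr1 (fun M : 'rV[R]_N => M 0 i) Feq.
  by rewrite compE /comp -/Hv H0 invr0 mulr0 addr0 mxE => /eqP; rewrite oppr_eq0 => /eqP.
by rewrite vsum; move/eqP; rewrite oner_eq0.
Qed.

Lemma eqv l : pp l * Sf l v = v 0 l * Hv.
Proof.
have := congr1 (fun M : 'rV[R]_N => M 0 l) Feq.
rewrite compE /comp -/Hv apowv mxE => /eqP; rewrite addrC subr_eq0 => /eqP <-.
by rewrite mulfVK // Hv_neq0.
Qed.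

Definition Tf (x : 'rV[R]_N) : R := \sum_(j < N) qq j * Sf j v * x 0 j.

Lemma dHfE x : dHf x = 2 * alpha * Tf x.
Proof.
rewrite /dHf; under eq_bigr do rewrite big_split /=.
rewrite big_split /=.
have F2 : \sum_(i < N) \sum_(j < N) pp j * (A i j * (alpha * qq i * x 0 i)) = alpha * Tf x.
  rewrite /Tf mulr_sumr; apply: eq_bigr => i _.
  rewrite SvE mulr_sumr mulr_suml mulr_sumr; apply: eq_bigr => j _; ring.
have F1 : \sum_(i < N) \sum_(j < N) A i j * pp i * (alpha * qq j * x 0 j) = alpha * Tf x.
  rewrite exchange_big /= /Tf mulr_sumr; apply: eq_bigr => j _.
  rewrite SvE mulr_sumr mulr_suml mulr_sumr; apply: eq_bigr => i _.
  rewrite (Asymij i j); ring.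
rewrite F1 F2; ring.
Qed.

Definition dcompf (l : 'I_N) (x : 'rV[R]_N) : R :=
  - x 0 l - v 0 l * (2 * alpha * Tf x) / Hv
  + alpha * pp l * (\sum_(j < N) A l j * qq j * x 0 j) / Hv
  + alpha * (qq l * Sf l v) * x 0 l / Hv.

Lemma dcomp l : hasD v (comp l) (dcompf l).
Proof.
have h := hasD_add (hasD_opp (hasD_coord l))
  (hasD_mul (hasD_mul (dP l) (dS l)) (hasD_inv dH Hv_neq0)).
apply: hasD_ext h _ => x.
rewrite dHfE apowv -/Hv eqv /dcompf.
have -> : \sum_(j < N) A l j * (alpha * qq j * x 0 j) = alpha * \sum_(j < N) A l j * qq j * x 0 j.
  by rewrite mulr_sumr; apply: eq_bigr => j _; ring.
have := Hv_neq0; move: (Hv) => h0 hn0.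
by field.
Qed.


Lemma Fdiff : differentiable (Ffun A alpha) v.
Proof.
have -> : Ffun A alpha = \sum_(j < N) (fun w => comp j w *: (delta_mx 0 j : 'rV[R]_N)).
  apply: funext => w; rewrite fct_sumE /= {1}(row_sum_delta (Ffun A alpha w)).
  by apply: eq_bigr => j _; rewrite compE.
apply: differentiable_sum => j; apply: differentiableZl.
exact: (dcomp j).1.
Qed.

Lemma DFe x l : ('d (Ffun A alpha) v x) 0 l = dcompf l x.
Proof.
rewrite -deriveE; last exact: Fdiff.
rewrite derive_mx; last exact: diff_derivable Fdiff.
rewrite mxE.
have -> : (fun t => Ffun A alpha t 0 l) = comp l by apply: funext => t; rewrite compE.
rewrite deriveE; last exact: (dcomp l).1.
exact: (dcomp l).2.
Qed.


Lemma ebaseE (i m : 'I_N) : ebase R i 0 m = (m == i)%:R.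
Proof. by rewrite /ebase mxE eqxx /= eq_sym. Qed.

Lemma sum_ebase_w (f : 'I_N -> R) i : \sum_(m < N) f m * ebase R i 0 m = f i.
Proof.
rewrite (bigD1 i) //= ebaseE eqxx mulr1 big1 ?addr0 // => m mi.
by rewrite ebaseE (negbTE mi) mulr0.
Qed.

Lemma sum_ebase (i : 'I_N) : \sum_(m < N) ebase R i 0 m = 1.
Proof. by rewrite -(sum_ebase_w (fun _ => 1) i); apply: eq_bigr => m _; rewrite mul1r. Qed.

Lemma a0 : 0 < alpha. Proof. exact: lt_trans ltr01 a1. Qed.
Lemma am1 : alpha - 1 != 0. Proof. by rewrite subr_eq0 gt_eqF. Qed.

Lemma qqv l : qq l * v 0 l = pp l.
Proof. by rewrite mulrC mulr_powRB1 // a0. Qed.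

Lemma qq0 l : v 0 l = 0 -> qq l = 0.
Proof. by move=> e; rewrite /qq e powR0 // am1. Qed.

Lemma pp0 l : v 0 l = 0 -> pp l = 0.
Proof. by move=> e; rewrite /pp e powR0 // gt_eqF // a0. Qed.

Lemma qS l : v 0 l != 0 -> qq l * Sf l v = Hv.
Proof.
move=> vl; apply: (mulIf vl).
by rewrite mulrAC qqv eqv mulrC.
Qed.

Lemma qSx (x : 'rV[R]_N) l : (forall m, v 0 m = 0 -> x 0 m = 0) ->
  qq l * Sf l v * x 0 l = Hv * x 0 l.
Proof.
move=> hx; have [e|ne] := eqVneq (v 0 l) 0; first by rewrite (hx _ e) !mulr0.
by rewrite qS.
Qed.

Lemma T_supp (x : 'rV[R]_N) : (forall m, v 0 m = 0 -> x 0 m = 0) -> Tf x = Hv * \sum_(m < N) x 0 m.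
Proof. by move=> hx; rewrite mulr_sumr; apply: eq_bigr => m _; rewrite qSx. Qed.

Lemma dF_off l (x : 'rV[R]_N) : v 0 l = 0 -> dcompf l x = - x 0 l.
Proof. by move=> e; rewrite /dcompf e (pp0 l e) (qq0 l e); ring. Qed.

Lemma dF_supp l (x : 'rV[R]_N) : (forall m, v 0 m = 0 -> x 0 m = 0) -> \sum_(m < N) x 0 m = 0 ->
  dcompf l x = (alpha - 1) * x 0 l + alpha * (pp l * (\sum_(j < N) A l j * qq j * x 0 j) / Hv).
Proof.
move=> hx sx; rewrite /dcompf T_supp // sx -[alpha * _ * x 0 l]mulrA qSx //.
have := Hv_neq0; move: (Hv) => h0 hn0.
by field.
Qed.

Lemma claim1 i j : v 0 i != 0 -> v 0 j != 0 ->
  derivable (Ffun A alpha) v (ebase R i - ebase R j) /\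
  'D_(ebase R i - ebase R j) (Ffun A alpha) v =
    (alpha - 1) *: (ebase R i - ebase R j) +
    alpha *: \sum_(l < N)
       ((v 0 l `^ alpha) *
          (A l i * v 0 i `^ (alpha - 1) - A l j * v 0 j `^ (alpha - 1))
        / Hfun A alpha v) *: ebase R l.
Proof.
move=> vi vj; split; first exact: diff_derivable Fdiff.
rewrite deriveE; last exact: Fdiff.
apply/rowP => l; rewrite DFe.
have xE m : (ebase R i - ebase R j) 0 m = ebase R i 0 m - ebase R j 0 m by rewrite !mxE.
rewrite dF_supp; first last.
- by rewrite (eq_bigr _ (fun m _ => xE m)) sumrB !sum_ebase subrr.
- move=> m vm; rewrite xE !ebaseE.
  have /negbTE -> : m != i by apply: contra_neq vi => <-; rewrite vm.
  have /negbTE -> : m != j by apply: contra_neq vj => <-; rewrite vm.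
  by rewrite subrr.
have -> : \sum_(j0 < N) A l j0 * qq j0 * (ebase R i - ebase R j) 0 j0
   = A l i * qq i - A l j * qq j.
  rewrite (eq_bigr (fun m => A l m * qq m * ebase R i 0 m - A l m * qq m * ebase R j 0 m)).
    by rewrite sumrB !(sum_ebase_w (fun m => A l m * qq m)).
  by move=> m _; rewrite xE mulrBr.
have -> : (\sum_(l0 < N) ((v 0 l0 `^ alpha) *
          (A l0 i * v 0 i `^ (alpha - 1) - A l0 j * v 0 j `^ (alpha - 1))
        / Hfun A alpha v) *: ebase R l0) =
   \row_(l0 < N) ((v 0 l0 `^ alpha) *
          (A l0 i * v 0 i `^ (alpha - 1) - A l0 j * v 0 j `^ (alpha - 1))
        / Hfun A alpha v).
  by rewrite [RHS]row_sum_delta; apply: eq_bigr => m _; rewrite mxE.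
by rewrite !mxE.
Qed.


Lemma claim2 i : v 0 i = 0 ->
  derivable (Ffun A alpha) v (ebase R i - v) /\
  'D_(ebase R i - v) (Ffun A alpha) v = - (ebase R i - v).
Proof.
move=> vi; split; first exact: diff_derivable Fdiff.
rewrite deriveE; last exact: Fdiff.
apply/rowP => l; rewrite DFe.
have xE m : (ebase R i - v) 0 m = ebase R i 0 m - v 0 m by rewrite !mxE.
have T : Tf (ebase R i - v) = - Hv.
  rewrite /Tf (eq_bigr (fun m => qq m * Sf m v * ebase R i 0 m - qq m * Sf m v * v 0 m));
    last by move=> m _; rewrite xE mulrBr.
  rewrite sumrB (sum_ebase_w (fun m => qq m * Sf m v)) (qq0 i vi) mul0r sub0r.
  congr (- _); transitivity (\sum_(m < N) v 0 m * Hv).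
    by apply: eq_bigr => m _; rewrite mulrAC qqv eqv.
  by rewrite -mulr_suml vsum mul1r.
have I : \sum_(j < N) A l j * qq j * (ebase R i - v) 0 j = - Sf l v.
  rewrite (eq_bigr (fun m => A l m * qq m * ebase R i 0 m - A l m * qq m * v 0 m));
    last by move=> m _; rewrite xE mulrBr.
  rewrite sumrB (sum_ebase_w (fun m => A l m * qq m)) (qq0 i vi) mulr0 sub0r.
  by congr (- _); rewrite SvE; apply: eq_bigr => m _; rewrite -mulrA qqv.
have Q : qq l * Sf l v * (ebase R i - v) 0 l = - (v 0 l * Hv).
  rewrite xE mulrBr [qq l * Sf l v * v 0 l]mulrAC qqv eqv ebaseE.
  have [e|ne] := eqVneq l i; last by rewrite mulr0 sub0r.
  by rewrite e (qq0 i vi) !mul0r sub0r.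
rewrite /dcompf T I -[alpha * _ * (ebase R i - v) 0 l]mulrA Q.
have E : alpha * pp l * - Sf l v = - (alpha * (v 0 l * Hv)) by rewrite -eqv; ring.
rewrite E.
rewrite [RHS]mxE.
have := Hv_neq0; move: (Hv) => h0 hn0.
by field.
Qed.


Definition Uf (x : 'rV[R]_N) (k : 'I_N) := \sum_(j < N) A k j * qq j * x 0 j.

Lemma symU (a b : 'rV[R]_N) :
  \sum_(k < N) qq k * b 0 k * Uf a k = \sum_(k < N) qq k * a 0 k * Uf b k.
Proof.
rewrite /Uf.
under eq_bigr do rewrite mulr_sumr.
under [RHS]eq_bigr do rewrite mulr_sumr.
rewrite [RHS]exchange_big /=; apply: eq_bigr => k _; apply: eq_bigr => j _.
rewrite (Asymij j k); ring.
Qed.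

Lemma real_arg (a b : 'rV[R]_N) (r s : R) :
  \sum_(m < N) a 0 m = 0 -> \sum_(m < N) b 0 m = 0 ->
  (exists k, (a 0 k != 0) || (b 0 k != 0)) ->
  (forall k, dcompf k a = r * a 0 k - s * b 0 k) ->
  (forall k, dcompf k b = s * a 0 k + r * b 0 k) -> s = 0.
Proof.
move=> sa sb [k0 nz0] Ea Eb.
have sq (x y : R) : (x != 0) || (y != 0) -> 0 < x ^+ 2 + y ^+ 2.
  move=> nz; rewrite lt_def paddr_eq0 ?sqr_ge0 // !sqrf_eq0 negb_and nz /=.
  by rewrite addr_ge0 ?sqr_ge0.
case: (boolP [exists k, (v 0 k == 0) && ((a 0 k != 0) || (b 0 k != 0))]).
  case/existsP => k /andP [/eqP vk nz].
  have ea := Ea k; have eb := Eb k; rewrite !dF_off // in ea eb.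
  have e1 : s * b 0 k = r * a 0 k + a 0 k by lra.
  have e2 : s * a 0 k = - b 0 k - r * b 0 k by lra.
  have : s * (a 0 k ^+ 2 + b 0 k ^+ 2) = 0.
    transitivity ((s * a 0 k) * a 0 k + (s * b 0 k) * b 0 k); first by ring.
    by rewrite e1 e2; ring.
  by move/eqP; rewrite mulf_eq0 (gt_eqF (sq _ _ nz)) orbF => /eqP.
move/existsPn => hk.
have ha m : v 0 m = 0 -> a 0 m = 0.
  move=> vm; have := hk m; rewrite vm eqxx /= negb_or !negbK => /andP [/eqP -> _] //.
have hb m : v 0 m = 0 -> b 0 m = 0.
  move=> vm; have := hk m; rewrite vm eqxx /= negb_or !negbK => /andP [_ /eqP ->] //.
have hHv := Hv_neq0.
have Id k : alpha / Hv * (qq k * b 0 k * Uf a k - qq k * a 0 k * Uf b k)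
            = - s * ((a 0 k ^+ 2 + b 0 k ^+ 2) / v 0 k).
  have [vk|vk] := eqVneq (v 0 k) 0.
    by rewrite (ha _ vk) (hb _ vk) (qq0 k vk); ring.
  apply: (mulIf vk).
  have ea := Ea k; have eb := Eb k; rewrite dF_supp // in ea; rewrite dF_supp // in eb.
  have Xa : alpha * (pp k * Uf a k / Hv) = r * a 0 k - s * b 0 k - (alpha - 1) * a 0 k.
    by rewrite -ea /Uf; ring.
  have Xb : alpha * (pp k * Uf b k / Hv) = s * a 0 k + r * b 0 k - (alpha - 1) * b 0 k.
    by rewrite -eb /Uf; ring.
  transitivity (b 0 k * (alpha * (pp k * Uf a k / Hv)) - a 0 k * (alpha * (pp k * Uf b k / Hv))).
    by rewrite -qqv; field.
  rewrite Xa Xb; field.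
  by [].
have : \sum_(k < N) alpha / Hv * (qq k * b 0 k * Uf a k - qq k * a 0 k * Uf b k) = 0.
  by rewrite -mulr_sumr sumrB symU subrr mulr0.
rewrite (eq_bigr _ (fun k _ => Id k)) -mulr_sumr => /eqP; rewrite mulf_eq0 oppr_eq0.
case/orP => [/eqP //|]; apply: contraTeq => _.
have vk0 : v 0 k0 != 0.
  by apply/eqP => vk; move: nz0; rewrite (ha _ vk) (hb _ vk) eqxx.
have vkp : 0 < v 0 k0 by rewrite lt_def vk0 v0.
rewrite gt_eqF // (bigD1 k0) //=.
have t0 : 0 < (a 0 k0 ^+ 2 + b 0 k0 ^+ 2) / v 0 k0 by rewrite divr_gt0 // sq.
have rest : 0 <= \sum_(i < N | i != k0) (a 0 i ^+ 2 + b 0 i ^+ 2) / v 0 i.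
  by apply: sumr_ge0 => i _; rewrite divr_ge0 ?v0 // addr_ge0 ?sqr_ge0.
lra.
Qed.


Lemma lin_comb (c : 'rV[R]_N) k :
  \sum_(m < N) c 0 m * linmx ('d (Ffun A alpha) v) m k = dcompf k c.
Proof.
rewrite -DFe {2}(row_sum_delta c) linear_sum summxE.
by apply: eq_bigr => m _; rewrite linearZ [in RHS]mxE mxE.
Qed.

Lemma claim3 lam : eigenvalue_T0 (linmx ('d (Ffun A alpha) v)) lam ->
  complex.Im lam = 0.
Proof.
move=> [z [zn0 zs zeq]].
pose a : 'rV[R]_N := \row_m complex.Re (z 0 m).
pose b : 'rV[R]_N := \row_m complex.Im (z 0 m).
have ReS n (F : 'I_n -> R[i]) : complex.Re (\sum_(m < n) F m) = \sum_(m < n) complex.Re (F m).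
  by elim/big_rec2: _ => // m x y _ <-; case: (F m) => ? ?; case: y => ? ?.
have ImS n (F : 'I_n -> R[i]) : complex.Im (\sum_(m < n) F m) = \sum_(m < n) complex.Im (F m).
  by elim/big_rec2: _ => // m x y _ <-; case: (F m) => ? ?; case: y => ? ?.
have ReMr (w : R[i]) (t : R) : complex.Re (w * real_complex R t) = complex.Re w * t.
  by case: w => x y /=; ring.
have ImMr (w : R[i]) (t : R) : complex.Im (w * real_complex R t) = complex.Im w * t.
  by case: w => x y /=; ring.
have ReM (l w : R[i]) : complex.Re (l * w) = complex.Re l * complex.Re w - complex.Im l * complex.Im w.
  by case: w => x y; case: l => x' y' /=.
have ImM (l w : R[i]) : complex.Im (l * w) = complex.Re l * complex.Im w + complex.Im l * complex.Re w.
  by case: w => x y; case: l => x' y' /=; ring.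
have compk k : (z *m map_mx (real_complex R) (linmx ('d (Ffun A alpha) v))) 0 k =
    \sum_(m < N) z 0 m * real_complex R (linmx ('d (Ffun A alpha) v) m k).
  by rewrite !mxE; apply: eq_bigr => m _; rewrite mxE.
apply: (real_arg a b (complex.Re lam)).
- by rewrite -[RHS](_ : complex.Re 0 = 0) // -zs ReS; apply: eq_bigr => m _; rewrite mxE.
- by rewrite -[RHS](_ : complex.Im 0 = 0) // -zs ImS; apply: eq_bigr => m _; rewrite mxE.
- case: (pickP (fun k => z 0 k != 0)) => [k zk|H0].
    exists k; rewrite !mxE; move: zk; case: (z 0 k) => x y /=.
    by apply: contraR; rewrite negb_or !negbK => /andP [/eqP -> /eqP ->].
  have z0 : z = 0.
    by apply/rowP => k; rewrite [RHS]mxE; apply/eqP; rewrite -[_ == _]negbK; have /= -> := H0 k.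
  by rewrite z0 eqxx in zn0.
- move=> k; rewrite -lin_comb [a 0 k]mxE [b 0 k]mxE.
  have := congr1 (fun M : 'rV[R[i]]_N => complex.Re (M 0 k)) zeq; rewrite /= compk ReS.
  rewrite mxE ReM => <-; apply: eq_bigr => m _; by rewrite ReMr mxE.
- move=> k; rewrite -lin_comb [a 0 k]mxE [b 0 k]mxE.
  have := congr1 (fun M : 'rV[R[i]]_N => complex.Im (M 0 k)) zeq; rewrite /= compk ImS.
  rewrite mxE ImM addrC => <-; apply: eq_bigr => m _; by rewrite ImMr mxE.
Qed.

End Main.

Theorem lemma3p7 (R : realType) (N : nat) (alpha : R) (A : 'M[R]_N)
  (v : 'rV[R]_N) :
  (2 <= N)%N -> 1 < alpha ->
  A^T = A ->
  (forall i j, 0 <= A i j) ->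
  (forall i j, i != j -> 0 < A i j) ->
  (exists c : R, forall i, \sum_(j < N) A i j = c) ->
  inDelta A v ->
  Ffun A alpha v = 0 ->
  [/\ (forall i j : 'I_N, v 0 i != 0 -> v 0 j != 0 ->
        derivable (Ffun A alpha) v (ebase R i - ebase R j) /\
        'D_(ebase R i - ebase R j) (Ffun A alpha) v =
          (alpha - 1) *: (ebase R i - ebase R j) +
          alpha *: \sum_(l < N)
             ((v 0 l `^ alpha) *
                (A l i * v 0 i `^ (alpha - 1) - A l j * v 0 j `^ (alpha - 1))
              / Hfun A alpha v) *: ebase R l),
      (forall i : 'I_N, v 0 i = 0 ->
        derivable (Ffun A alpha) v (ebase R i - v) /\
        'D_(ebase R i - v) (Ffun A alpha) v = - (ebase R i - v)),
      differentiable (Ffun A alpha) v &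
      (forall lam : R[i], eigenvalue_T0 (linmx ('d (Ffun A alpha) v)) lam ->
        complex.Im lam = 0)].
Proof.
move=> N2 a1 Asym Apos Apos' rowsum [v0 vsum _] Feq.
split.
- by move=> i j vi vj; apply: claim1.
- by move=> i vi; apply: claim2.
- by apply: Fdiff.
- by move=> lam; apply: claim3.
Qed.
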